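(* Let $S$ be a finite set and $\mathcal{C}\subseteq 2^S$, and let $A_{\mathcal{C}}=\{2^X\mid X\in\mathcal{D}\}$, where $\mathcal{D}=\{Y\subseteq S\mid\exists X\in\mathcal{C},\ Y\subseteq X\}$ is the downset generated by $\mathcal{C}$ and $2^X=\{Y\subseteq S\mid Y\subseteq X\}$. Then $\mathcal{C}\in\bullet(A_{\mathcal{C}})$.
   Context: For sets $A,B$, the disjoint union $A\,\dot\cup\,B=A\cup B$ is defined only when $A\cap B=\emptyset$, and the subset complement $A\,\dot\setminus\,B=A\setminus B$ is defined only when $B\subseteq A$. For a finite family $\mathcal{G}$ of sets, $\bullet(\mathcal{G})$ is the smallest family of sets containing $\emptyset$ and every member of $\mathcal{G}$ and closed under all well-defined disjoint unions and subset complements. Here members of $\mathcal{G}$ are subsets of $2^S$. *)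

(* Defs.v *)
From mathcomp Require Import all_boot.
Set Implicit Arguments. Unset Strict Implicit. Unset Printing Implicit Defensive.

Inductive bullet (S : finType) (G : {set {set {set S}}}) : {set {set S}} -> Prop :=
| bullet_empty : bullet G set0
| bullet_gen A : A \in G -> bullet G A
| bullet_dunion A B : bullet G A -> bullet G B -> [disjoint A & B] ->
    bullet G (A :|: B)
| bullet_sdiff A B : bullet G A -> bullet G B -> B \subset A ->
    bullet G (A :\: B).

Definition downset (S : finType) (C : {set {set S}}) : {set {set S}} :=
  [set Y : {set S} | [exists X in C, Y \subset X]].

Definition A_fam (S : finType) (C : {set {set S}}) : {set {set {set S}}} :=
  [set powerset X | X in downset C].

(* Main.v *)
Require Import Defs.
From mathcomp Require Import all_boot.

Lemma union_sing (S : finType) (G : {set {set {set S}}}) (F : {set {set S}}) :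
  (forall Y, Y \in F -> bullet G [set Y]) -> bullet G F.
Proof.
have [n] := ubnP #|F|; elim: n F => // n IH F hF H.
case: (set_0Vmem F) => [->|[Y YF]]; first exact: bullet_empty.
rewrite -(setD1K YF); apply: bullet_dunion.
- exact: H.
- apply: IH; first by move: hF; rewrite (cardsD1 Y F) YF.
  by move=> Z /setD1P [_ ZF]; apply: H.
- by rewrite disjoints1 !inE eqxx.
Qed.

Lemma sing (S : finType) (C : {set {set S}}) n (X : {set S}) :
  #|X| < n -> X \in downset C -> bullet (A_fam C) [set X].
Proof.
elim: n X => // n IH X hX XD.
have -> : [set X] = powerset X :\: (powerset X :\ X).
  apply/setP=> Y; rewrite !inE; case: eqP => [->|] //=.
  by rewrite subxx.
  by rewrite andNb.
apply: bullet_sdiff.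
- by apply: bullet_gen; apply/imsetP; exists X.
- apply: union_sing => Y /setD1P [YX]; rewrite inE => sYX.
  apply: IH.
  + have /proper_card h : Y \proper X by rewrite properEneq YX sYX.
    exact: leq_trans h hX.
  + move: XD; rewrite !inE => /existsP [Z /andP [ZC XZ]].
    by apply/existsP; exists Z; rewrite ZC (subset_trans sYX XZ).
- exact: subD1set.
Qed.

Theorem lemma5p7 (S : finType) (C : {set {set S}}) : bullet (A_fam C) C.
Proof.
apply: union_sing => Y YC; apply: (@sing _ _ #|Y|.+1) => //.
by rewrite inE; apply/existsP; exists Y; rewrite YC subxx.
Qed.
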